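(* Consider the Network Design Problem with $\bar y_a=\infty$ for all $a\in A$, and suppose it has an optimal solution. Then there exist an optimal solution $(x,y)$ and an $s$--$t$ path $P$ in (the underlying undirected graph of) $G$ such that $x_a=0$ and $y_a=0$ for all $a\notin P$.
   Context: Fix $r\ge1$. Let $G=(V,A)$ be a weakly connected directed graph with distinct source $s$ and sink $t$. For $y\in\mathbb{R}_{\ge 0}^A$ let $\operatorname{supp}(y)=\{a: y_a>0\}$, $G'=(V,\operatorname{supp}(y))$ with node-arc incidence matrix $\Gamma'$, and $R^y_{s,t}=\min\{\sum_{a\in\operatorname{supp}(y)} |f_a|^{r+1}/y_a^{r} : \Gamma' f=\mathbf{1}_s-\mathbf{1}_t\}$ ($=\infty$ if $s,t$ are disconnected in $G'$); this is the effective resistance of the network induced by $y$. The Network Design Problem, given $c,\gamma\in\mathbb{R}_{\ge0}^A$, bounds $\bar y\in(\mathbb{R}_{\ge0}\cup\{\infty\})^A$ and $B>0$, is: minimize $\sum_{a\in A}(c_a y_a+\gamma_a x_a)$ over $x\in\{0,1\}^A$, $y\in\mathbb{R}_{\ge0}^A$ subject to $R^y_{s,t}\le B$, $y_a\le \bar y_a$, and $y_a>0\Rightarrow x_a=1$ for all $a$. Arc orientations play no role in paths here. *)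

(* Defs.v *)
From HB Require Import structures.
From mathcomp Require Import all_boot all_order all_algebra.
From mathcomp Require Import all_classical all_reals all_analysis.
Set Implicit Arguments. Unset Strict Implicit. Unset Printing Implicit Defensive.
Import Order.TTheory GRing.Theory Num.Theory.
Local Open Scope ring_scope.

(* A directed graph G = (V, A): arc a goes from tl a to hd a (parallel arcs allowed). *)

Definition joins (V A : finType) (tl hd : A -> V) (a : A) (u v : V) : bool :=
  ((tl a == u) && (hd a == v)) || ((tl a == v) && (hd a == u)).

Definition weakly_connected (V A : finType) (tl hd : A -> V) : Prop :=
  forall u v : V, connect [rel x y | [exists a, joins tl hd a x y]] u v.

Definition incidence_app (R : realType) (V A : finType) (tl hd : A -> V)
  (f : A -> R) (v : V) : R :=
  \sum_(a | tl a == v) f a - \sum_(a | hd a == v) f a.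

Definition unit_st_flow (R : realType) (V A : finType) (tl hd : A -> V)
  (s t : V) (y : A -> R) (f : A -> R) : Prop :=
  (forall a, ~ (0 < y a) -> f a = 0) /\
  (forall v, incidence_app tl hd f v = (v == s)%:R - (v == t)%:R).

Definition flow_energy (R : realType) (A : finType) (r : R) (y f : A -> R) : R :=
  \sum_(a | 0 < y a) (`|f a| `^ (r + 1) / (y a) `^ r).

(* effective resistance R^y_{s,t}: the min (= inf) of the energy over unit s-t flows
   in G' = (V, supp y); +oo if there is none *)
Definition eff_resistance (R : realType) (V A : finType) (tl hd : A -> V)
  (s t : V) (r : R) (y : A -> R) : \bar R :=
  ereal_inf [set (flow_energy r y f)%:E | f in [set f | unit_st_flow tl hd s t y f]].

Definition ndp_feasible (R : realType) (V A : finType) (tl hd : A -> V)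
  (s t : V) (r : R) (ybar : A -> \bar R) (B : R) (x : A -> bool) (y : A -> R) : Prop :=
  [/\ forall a, 0 <= y a,
      (eff_resistance tl hd s t r y <= B%:E)%E,
      forall a, ((y a)%:E <= ybar a)%E
    & forall a, 0 < y a -> x a = true].

Definition ndp_cost (R : realType) (A : finType) (c gam : A -> R)
  (x : A -> bool) (y : A -> R) : R :=
  \sum_a (c a * y a + gam a * (x a)%:R).

Definition ndp_optimal (R : realType) (V A : finType) (tl hd : A -> V)
  (s t : V) (r : R) (c gam : A -> R) (ybar : A -> \bar R) (B : R)
  (x : A -> bool) (y : A -> R) : Prop :=
  ndp_feasible tl hd s t r ybar B x y /\
  forall x' y', ndp_feasible tl hd s t r ybar B x' y' ->
    ndp_cost c gam x y <= ndp_cost c gam x' y'.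

Definition undirected_st_path (V A : finType) (tl hd : A -> V) (s t : V)
  (P : seq A) : Prop :=
  exists vs : seq V,
    [/\ size vs = (size P).+1, head s vs = s, last s vs = t, uniq vs
      & forall (i : nat) (a0 : A), (i < size P)%N ->
          joins tl hd (nth a0 P i) (nth s vs i) (nth s vs i.+1)].

(* Main.v *)
Require Import Defs.
From HB Require Import structures.
From mathcomp Require Import all_boot all_order all_algebra.
From mathcomp Require Import all_classical all_reals all_analysis.
Import Order.TTheory GRing.Theory Num.Theory.
Import numFieldNormedType.Exports.
Local Open Scope ring_scope.
From mathcomp Require Import zify ring lra.
Set Implicit Arguments. Unset Strict Implicit. Unset Printing Implicit Defensive.
Section Graph.
Variables (R : realType) (V A : finType) (tl hd : A -> V) (s t : V).

Lemma incE (f : A -> R) v : incidence_app tl hd f v =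
  \sum_a f a * ((tl a == v)%:R - (hd a == v)%:R).
Proof.
rewrite /incidence_app (big_mkcond (fun a => tl a == v)) (big_mkcond (fun a => hd a == v)).
rewrite -sumrB; apply: eq_bigr => a _.
by rewrite mulrBr; case: (tl a == v); case: (hd a == v); rewrite ?mulr1 ?mulr0.
Qed.

Lemma incB (f h : A -> R) k v :
  incidence_app tl hd (fun a => f a - k * h a) v =
  incidence_app tl hd f v - k * incidence_app tl hd h v.
Proof.
rewrite !incE mulr_sumr -sumrB; apply: eq_bigr => a _.
by rewrite mulrBl mulrA.
Qed.

Definition spath (vs : seq V) (P : seq A) : Prop :=
  [/\ size vs = (size P).+1, head s vs = s, last s vs = t, uniq vs
    & forall (i : nat) (a0 : A), (i < size P)%N ->
          joins tl hd (nth a0 P i) (nth s vs i) (nth s vs i.+1)].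

Definition psig (vs : seq V) (P : seq A) (a : A) : R :=
  if a \in P then (if tl a == nth s vs (index a P) then 1 else -1) else 0.

Lemma spath_uniq vs P : spath vs P -> uniq P.
Proof.
case=> sz _ _ uv J.
case: P sz J => [//|a0 P'] sz J.
apply/(uniqP a0) => i j; rewrite !inE => ilt jlt eqij.
have Ji := J i a0 ilt; have Jj := J j a0 jlt.
rewrite eqij in Ji.
have szv : size vs = (size (a0 :: P')).+1 by [].
have Hn : forall k l, (k < size vs)%N -> (l < size vs)%N ->
   nth s vs k = nth s vs l -> k = l.
  by move=> k l kl ll /eqP; rewrite nth_uniq // => /eqP.
have lti : (i.+1 < size vs)%N by rewrite szv.
have ltj : (j.+1 < size vs)%N by rewrite szv.
have lti0 : (i < size vs)%N by rewrite szv ltnS ltnW.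
have ltj0 : (j < size vs)%N by rewrite szv ltnS ltnW.
move: Ji Jj; rewrite /joins.
case/orP=> /andP[/eqP e1 /eqP e2]; case/orP=> /andP[/eqP e3 /eqP e4].
- by apply: Hn; rewrite // -e1 -e3.
- have := Hn _ _ lti0 ltj (etrans (esym e1) e3).
  have := Hn _ _ lti ltj0 (etrans (esym e2) e4). lia.
- have := Hn _ _ lti ltj0 (etrans (esym e1) e3).
  have := Hn _ _ lti0 ltj (etrans (esym e2) e4). lia.
- by apply: Hn; rewrite // -e2 -e4.
Qed.

Lemma sum_in_seq (P : seq A) (F : A -> R) : uniq P ->
  \sum_(a <- P) F a = \sum_a (if a \in P then F a else 0).
Proof. by move=> uP; rewrite big_uniq // big_mkcond. Qed.

Lemma psig_term vs P i a0 v : spath vs P -> (i < size P)%N ->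
  psig vs P (nth a0 P i) * ((tl (nth a0 P i) == v)%:R - (hd (nth a0 P i) == v)%:R)
  = (nth s vs i == v)%:R - (nth s vs i.+1 == v)%:R.
Proof.
move=> sp ilt; have uP := spath_uniq sp.
case: sp => sz _ _ uv J.
rewrite /psig mem_nth // index_uniq //.
have := J i a0 ilt; rewrite /joins.
case/orP=> /andP[/eqP e1 /eqP e2].
  by rewrite e1 eqxx mul1r e2.
have ne : nth s vs i.+1 != nth s vs i.
  rewrite nth_uniq ?sz //; lia.
rewrite e1 (negbTE ne) e2 mulN1r opprB //.
Qed.

Lemma psig_inc vs P v : spath vs P ->
  incidence_app tl hd (psig vs P) v = (v == s)%:R - (v == t)%:R.
Proof.
move=> sp; have uP := spath_uniq sp.
rewrite incE.
have -> : \sum_a psig vs P a * ((tl a == v)%:R - (hd a == v)%:R) =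
  \sum_(a <- P) psig vs P a * ((tl a == v)%:R - (hd a == v)%:R).
  rewrite [RHS]sum_in_seq //; apply: eq_bigr => a _.
  by rewrite /psig; case: (a \in P); rewrite ?mul0r.
have sp' := sp; case: sp' => sz hs ls uv J.
case: P sz J sp uP => [|a0 P'] sz J sp uP.
  case: vs sz hs ls {uv J sp} => [//|x [|//]] _ /= -> ->.
  by rewrite big_nil subrr.
rewrite (big_nth a0).
rewrite (eq_big_nat _ _ (F2 := fun i => (nth s vs i == v)%:R - (nth s vs i.+1 == v)%:R)); last first.
  by move=> i /andP[_ ilt]; rewrite psig_term.
have -> : \sum_(0 <= i < size (a0 :: P')) ((nth s vs i == v)%:R - (nth s vs i.+1 == v)%:R : R)
   = - \sum_(0 <= i < size (a0 :: P')) ((nth s vs i.+1 == v)%:R - (nth s vs i == v)%:R : R).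
  by rewrite -sumrN; apply: eq_bigr => i _; rewrite opprB.
rewrite telescope_sumr // opprB nth0 hs.
have -> : nth s vs (size (a0 :: P')) = t by rewrite -ls -nth_last sz.
by rewrite !(eq_sym v).
Qed.

Definition cond (g : A -> R) (a : A) (v w : V) : bool :=
  ((tl a == v) && (hd a == w) && (0 < g a)) || ((hd a == v) && (tl a == w) && (g a < 0)).
Definition erel (g : A -> R) : rel V := fun v w => [exists a, cond g a v w].

Lemma sum_ind (S : {set V}) (u : V) : \sum_(v in S) ((u == v)%:R : R) = (u \in S)%:R.
Proof.
case uS: (u \in S).
  rewrite (bigD1 u) //= eqxx big1 ?addr0 // => v /andP[_ vu].
  by rewrite eq_sym (negbTE vu).
by rewrite big1 // => v vS; case: eqP vS => // <-; rewrite uS.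
Qed.

Lemma cut_sum (S : {set V}) (g : A -> R) :
  \sum_(v in S) incidence_app tl hd g v =
  \sum_a g a * ((tl a \in S)%:R - (hd a \in S)%:R).
Proof.
under eq_bigr do rewrite incE.
rewrite exchange_big /=; apply: eq_bigr => a _.
by rewrite -mulr_sumr sumrB !sum_ind.
Qed.

Definition isflow (g : A -> R) (phi : R) :=
  forall v, incidence_app tl hd g v = phi * ((v == s)%:R - (v == t)%:R).

Lemma reach g phi : 0 < phi -> isflow g phi -> connect (erel g) s t.
Proof.
move=> p0 inc; apply/negPn/negP => nst.
pose S := [set v | connect (erel g) s v].
have sS : s \in S by rewrite inE connect0.
have tS : t \notin S by rewrite inE.
have e1 : \sum_(v in S) incidence_app tl hd g v = phi.
  under eq_bigr do rewrite inc.
  rewrite -mulr_sumr sumrB.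
  under eq_bigr do rewrite eq_sym.
  under [X in _ - X]eq_bigr do rewrite eq_sym.
  by rewrite !sum_ind sS (negbTE tS) subr0 mulr1.
have e2 : \sum_a g a * ((tl a \in S)%:R - (hd a \in S)%:R) <= 0.
  apply: sumr_le0 => a _.
  case tlS: (tl a \in S); case hdS: (hd a \in S) => /=.
  - by rewrite subrr mulr0.
  - rewrite subr0 mulr1 leNgt; apply/negP => ga.
    move: hdS; rewrite inE; move: tlS; rewrite inE => /connect_trans -> //.
    apply: connect1; apply/existsP; exists a; by rewrite /cond !eqxx ga.
  - rewrite sub0r mulrN1 oppr_le0 leNgt; apply/negP => ga.
    move: tlS; rewrite inE; move: hdS; rewrite inE => /connect_trans -> //.
    apply: connect1; apply/existsP; exists a; by rewrite /cond !eqxx ga orbT.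
  - by rewrite subrr mulr0.
move: e2; rewrite -cut_sum e1 => e2.
by move: p0; rewrite ltNge e2.
Qed.

Lemma conf_path g phi : 0 < phi -> isflow g phi ->
  exists vs P, spath vs P /\ (forall a, a \in P -> 0 < psig vs P a * g a).
Proof.
move=> p0 inc.
case/connectP: (reach p0 inc) => p pth.
case: (shortenP pth) => p' pth' uv _ tl_eq.
case: p' pth' uv tl_eq => [|w q] pth' uv tl_eq.
  exists [:: s], [::]; split; last by [].
  by split => //; rewrite tl_eq.
have : erel g s w by move: pth' => /= /andP[].
case/existsP => a0 _.
pose pick_arc v w := odflt a0 [pick a | cond g a v w].
pose vs := s :: w :: q.
pose P := pairmap pick_arc s (w :: q).
have key : forall i a1, (i < size P)%N ->
    cond g (nth a1 P i) (nth s vs i) (nth s vs i.+1).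
  move=> i a1; rewrite size_pairmap => ilt.
  rewrite /P (nth_pairmap s) //.
  have := (pathP s pth') i ilt.
  rewrite /pick_arc /erel; case: pickP => [b cb //|none].
  by case/existsP => b; rewrite none.
have uvs : uniq vs by [].
have sp : spath vs P.
  split => //; first by rewrite /= size_pairmap.
  move=> i a1 ilt; have := key i a1 ilt.
  by rewrite /cond /joins; case/orP=> /andP[/andP[-> ->] _]; rewrite ?orbT.
exists vs, P; split => // a aP.
have uP := spath_uniq sp.
have ilt : (index a P < size P)%N by rewrite index_mem.
have := key (index a P) a ilt; rewrite nth_index // /psig aP.
have ne : nth s vs (index a P).+1 != nth s vs (index a P).
  have : (size vs = (size P).+1) by rewrite /= size_pairmap.
  move=> sz; rewrite nth_uniq ?sz //; lia.
case/orP=> /andP[/andP[/eqP e1 /eqP e2] ga].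
  by rewrite e1 eqxx mul1r.
by rewrite e2 (negbTE ne) mulN1r oppr_gt0.
Qed.

Lemma exists_min (P : seq A) (h : A -> R) : P != [::] ->
  exists2 m, m \in P & forall a, a \in P -> h m <= h a.
Proof.
elim: P => [//|a P IH] _.
case: (P =P [::]) => [->|/eqP ne].
  by exists a; [rewrite inE eqxx | move=> b; rewrite inE => /eqP->].
case: (IH ne) => m mP mmin.
case: (leP (h a) (h m)) => ham.
  exists a; first by rewrite inE eqxx.
  move=> b; rewrite inE => /orP[/eqP->//|bP]; exact: le_trans ham (mmin b bP).
exists m; first by rewrite inE mP orbT.
move=> b; rewrite inE => /orP[/eqP->|bP]; [exact: ltW | exact: mmin].
Qed.

Lemma comb1 (phi mu LP LP' Lg : R) : 0 < mu -> mu < phi ->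
  (phi - mu) * LP' <= Lg - mu * LP -> LP <= LP' -> phi * LP <= Lg.
Proof. move=> m0 mp h hl; have : (phi - mu) * LP <= (phi - mu) * LP'.
  by apply: ler_wpM2l => //; rewrite subr_ge0 ltW.
move: h; rewrite !mulrBl; lra. Qed.

Lemma comb2 (phi mu LP LP' Lg : R) : 0 < mu -> mu < phi ->
  (phi - mu) * LP' <= Lg - mu * LP -> LP' < LP -> phi * LP' <= Lg.
Proof. move=> m0 mp h hl; have : mu * LP' <= mu * LP.
  by apply: ler_wpM2l => //; rewrite ltW.
move: h; rewrite !mulrBl; lra. Qed.

Lemma decomp (l : A -> R) : (forall a, 0 <= l a) ->
  forall (n : nat) (g : A -> R) (phi : R), (#|[set a | g a != 0%R]| < n)%N -> 0 < phi -> isflow g phi ->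
  exists vs P, [/\ spath vs P, (forall a, a \in P -> g a != 0) &
     phi * \sum_(a <- P) l a <= \sum_a `|g a| * l a].
Proof.
move=> l0; elim=> [//|n IH] g phi card p0 inc.
case: (conf_path p0 inc) => vs [P [sp conf]].
have uP := spath_uniq sp.
have Psupp : forall a, a \in P -> g a != 0.
  by move=> a /conf; case: (g a =P 0) => // ->; rewrite mulr0 ltxx.
have LPle : \sum_(a <- P) `|g a| * l a <= \sum_a `|g a| * l a.
  rewrite sum_in_seq //; apply: ler_sum => a _; case: (a \in P) => //.
  exact: mulr_ge0.
case: (P =P [::]) => [P0|/eqP Pne].
  exists vs, P; split => //; rewrite P0 big_nil mulr0.
  by apply: sumr_ge0 => a _; exact: mulr_ge0.
case: (exists_min (fun a => `|g a|) Pne) => m mP mmin.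
case: (leP phi `|g m|) => phim.
  exists vs, P; split => //.
  apply: le_trans LPle; rewrite mulr_sumr !big_seq; apply: ler_sum => a aP.
  by apply: ler_wpM2r => //; exact: le_trans phim (mmin a aP).
pose mu : R := `|g m|.
have mu0 : 0 < mu by rewrite normr_gt0 Psupp.
have mmin' : forall a, a \in P -> mu <= `|g a| by exact: mmin.
have phim' : mu < phi by exact: phim.
pose g' := fun a => g a - mu * psig vs P a.
have inc' : isflow g' (phi - mu).
  by move=> v; rewrite incB psig_inc // inc mulrBl.
have ng' : forall a, `|g' a| = `|g a| - mu * (a \in P)%:R.
  move=> a; rewrite /g'; case aP: (a \in P); last first.
    by rewrite /psig aP !mulr0 !subr0.
  have := conf a aP; have := mmin' a aP; rewrite /psig aP mulr1.
  case: ifP => _.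
    rewrite mul1r mulr1 => mle ga.
    rewrite (gtr0_norm ga) in mle *; rewrite ger0_norm //; lra.
  rewrite mulN1r mulrN1 oppr_gt0 => mle ga.
  rewrite (ltr0_norm ga) in mle *; rewrite ler0_norm; lra.
have supp' : forall a, g' a != 0 -> (g a != 0) && (a != m).
  move=> a; rewrite -normr_eq0 ng' => ne; apply/andP; split.
    apply/negP => /eqP g0; move: ne; case aP: (a \in P).
      by move: (Psupp a aP); rewrite g0 eqxx.
    by rewrite g0 normr0 mulr0 subrr eqxx.
  by apply/negP => /eqP am; move: ne; rewrite am mP mulr1 /mu subrr eqxx.
have card' : (#|[set a | g' a != 0%R]| < n)%N.
  have sub : [set a | g' a != 0] \subset [set a | g a != 0] :\ m.
    by apply/fintype.subsetP => a; rewrite !inE => /supp' /andP[-> ->].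
  have mS : m \in [set a | g a != 0] by rewrite inE Psupp.
  have := subset_leq_card sub.
  move: card; rewrite (cardsD1 m) mS /=; lia.
have mph : 0 < phi - mu by rewrite subr_gt0.
case: (IH g' (phi - mu) card' mph inc') => vs' [P' [sp' sP' ineq']].
have Lg' : \sum_a `|g' a| * l a = \sum_a `|g a| * l a - mu * \sum_(a <- P) l a.
  rewrite sum_in_seq // mulr_sumr -sumrB; apply: eq_bigr => a _.
  by rewrite ng'; case: (a \in P); rewrite ?mulr1 ?mulr0 ?subr0 // mulrBl.
rewrite Lg' in ineq'.
case: (leP (\sum_(a <- P) l a) (\sum_(a <- P') l a)) => hL.
  exists vs, P; split => //; exact: (comb1 mu0 phim' ineq' hL).
exists vs', P'; split => //.
  by move=> a /sP' /supp' /andP[].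
exact: (comb2 mu0 phim' ineq' hL).
Qed.

End Graph.
Section Cont.
Variable R : realType.
Local Open Scope classical_set_scope.

Lemma cont_pow (p : R) : 0 < p -> continuous (fun x : R => `|x| `^ p).
Proof.
move=> p0 x0.
case: (eqVneq x0 0) => [->|x0n].
  apply/cvgrPdist_lt => e e0.
  have ep : 0 < e `^ p^-1 by rewrite powR_gt0.
  have nb : \forall x \near (0:R), `|x| < e `^ p^-1 by exact: nbhs0_lt.
  move: nb; apply: filterS => x xl.
  rewrite normr0 powR0 ?gt_eqF // sub0r normrN ger0_norm ?powR_ge0 //.
  have := gt0_ltr_powR p0 _ _ xl.
  rewrite -powRrM mulVf ?gt_eqF // powRr1 ?ltW //; apply.
    by rewrite nnegrE normr_ge0.
  by rewrite nnegrE ltW.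
have ne : \forall x \near x0, x != 0.
  exact: (@cvgr_neq0 R R^o R (nbhs x0) _ id x0 cvg_id x0n).
have H : {for x0, continuous (fun x => expR (p * ln `|x|))}.
  have c1 : {for x0, continuous (fun x : R => `|x|)} by exact: norm_continuous.
  have c2 : {for `|x0|, continuous (@ln R)} by apply: continuous_ln; rewrite normr_gt0.
  have c3 := continuous_comp c1 c2.
  have c4 : {for ln `|x0|, continuous (fun y : R => p * y)}.
    by apply: continuousM; [exact: cst_continuous | exact: cvg_id].
  have c5 := continuous_comp c3 c4.
  exact: (continuous_comp c5 (@continuous_expR R _)).
have eqn : {near x0, (fun x => expR (p * ln `|x|)) =1 (fun x => `|x| `^ p)}.
  by near=> x; rewrite /powR normr_eq0 ifN //; near: x.
apply: cvg_trans (near_eq_cvg eqn) _.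
by rewrite /powR normr_eq0 ifN //.
Unshelve. all: by end_near.
Qed.

Lemma cont_sum (T : topologicalType) (I : Type) (r0 : seq I) (P : pred I)
   (F : I -> T -> R) : (forall i, continuous (F i)) ->
   continuous (fun x => \sum_(i <- r0 | P i) F i x).
Proof.
move=> cF; elim: r0 => [|i r0 IH].
  have -> : (fun x => \sum_(i <- [::] | P i) F i x) = (fun=> 0).
    by apply: funext => x; rewrite big_nil.
  exact: cst_continuous.
have -> : (fun x => \sum_(j <- i :: r0 | P j) F j x) =
   (fun x => (if P i then F i x else 0) + \sum_(j <- r0 | P j) F j x).
  by apply: funext => x; rewrite big_cons; case: (P i); rewrite ?add0r.
move=> x; apply: continuousD; last exact: IH.
case: (P i); [exact: cF | exact: cst_continuous].
Qed.

Lemma pre_closed (T : topologicalType) (f : T -> R) (D : set R) :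
  continuous f -> closed D -> closed (f @^-1` D).
Proof. by move=> cf cD; apply: preimage_closed => // x _; exact: cf. Qed.

End Cont.

Lemma closed_ext (T : topologicalType) (X Y : set T) :
  (forall x, X x <-> Y x) -> closed Y -> closed X.
Proof.
move=> H cY; have -> : X = Y by apply/seteqP; split => x /H.
exact: cY.
Qed.

Section MinFlow.
Variables (R : realType) (V A : finType) (tl hd : A -> V) (s t : V) (r : R) (y : A -> R).
Hypothesis r1 : 1 <= r.
Local Open Scope classical_set_scope.

Definition phiv (v : 'rV[R]_#|A|) : A -> R := fun a => v ord0 (enum_rank a).
Definition psiv (g : A -> R) : 'rV[R]_#|A| := \row_i g (enum_val i).

Lemma phipsi g : phiv (psiv g) = g.
Proof. by apply: funext => a; rewrite /phiv /psiv mxE enum_rankK. Qed.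

Lemma cont_phiv a : continuous (fun v => phiv v a).
Proof. move=> v; exact: coord_continuous. Qed.

Lemma energy_ge0 g : 0 <= flow_energy r y g.
Proof. by apply: sumr_ge0 => a _; apply: divr_ge0; exact: powR_ge0. Qed.

Lemma cont_energy : continuous (fun v => flow_energy r y (phiv v)).
Proof.
have r0 : 0 < r + 1 by have := r1; lra.
rewrite /flow_energy; apply: cont_sum => a v.
apply: (@continuousM _ _ (fun x => `|phiv x a| `^ (r + 1)) (fun=> (y a `^ r)^-1)).
  exact: (continuous_comp (@cont_phiv a v) (@cont_pow R _ r0 (phiv v a))).
exact: cst_continuous.
Qed.

Lemma cont_inc w : continuous (fun v => incidence_app tl hd (phiv v) w).
Proof.
have -> : (fun v => incidence_app tl hd (phiv v) w) =
  (fun v => \sum_a phiv v a * ((tl a == w)%:R - (hd a == w)%:R)).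
  by apply: funext => v; rewrite incE.
apply: cont_sum => a v.
apply: (@continuousM _ _ (fun x => phiv x a) (fun=> ((tl a == w)%:R - (hd a == w)%:R))).
  exact: (@cont_phiv a v).
exact: cst_continuous.
Qed.

Lemma min_flow : (exists f0, unit_st_flow tl hd s t y f0) ->
  exists f, unit_st_flow tl hd s t y f /\
    forall g, unit_st_flow tl hd s t y g -> flow_energy r y f <= flow_energy r y g.
Proof.
case=> f0 fl0.
pose E0 := flow_energy r y f0.
pose M := \sum_a (1 + E0 * y a `^ r).
have E00 : 0 <= E0 by exact: energy_ge0.
have bound : forall g, unit_st_flow tl hd s t y g -> flow_energy r y g <= E0 ->
    forall a, `|g a| <= M.
  move=> g [supp _] Eg a.
  have Mge : forall b, 1 + E0 * y b `^ r <= M.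
    move=> b; rewrite /M (bigD1 b) //= lerDl; apply: sumr_ge0 => c _.
    by apply: addr_ge0 => //; apply: mulr_ge0 => //; exact: powR_ge0.
  case: (boolP (0 < y a)) => ya; last first.
    rewrite (supp a) ?normr0; last by move/negP: ya.
    by apply: le_trans (Mge a); apply: addr_ge0 => //; apply: mulr_ge0 => //; exact: powR_ge0.
  apply: le_trans (Mge a).
  have yr : 0 < y a `^ r by rewrite powR_gt0.
  have term : `|g a| `^ (r + 1) / y a `^ r <= E0.
    apply: le_trans Eg; rewrite /flow_energy (bigD1 a) //= lerDl.
    by apply: sumr_ge0 => b _; apply: divr_ge0; exact: powR_ge0.
  have t2 : `|g a| `^ (r + 1) <= E0 * y a `^ r by rewrite -ler_pdivrMr.
  have t3 : `|g a| <= 1 + `|g a| `^ (r + 1).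
    case: (leP `|g a| 1) => h.
      by apply: le_trans h _; rewrite lerDl powR_ge0.
    have r11 : 1 <= r + 1 by have := r1; lra.
    apply: le_trans (le1r_powR (ltW h) r11) _.
    by rewrite lerDr.
  lra.
pose S := [set v | unit_st_flow tl hd s t y (phiv v) /\ forall a, `|phiv v a| <= M].
have Sbox : S `<=` [set v : 'rV[R]_#|A| | forall i, `[- M, M] (v ord0 i)].
  move=> v [_ b] i /=; have := b (enum_val i).
  by rewrite /phiv enum_valK in_itv /= ler_norml.
have Sclosed : closed S.
  have -> : S = (\bigcap_(a in [set: A]) [set v | ~ 0 < y a -> phiv v a = 0]) `&`
     (\bigcap_(w in [set: V]) [set v | incidence_app tl hd (phiv v) w = (w == s)%:R - (w == t)%:R]) `&`
     (\bigcap_(a in [set: A]) [set v | `|phiv v a| <= M]).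
    apply/seteqP; split => v /=.
      move=> [[h1 h2] h3]; split; first split.
      - by move=> x _; exact: h1.
      - by move=> x _; exact: h2.
      - by move=> x _; exact: h3.
    move=> [[h1 h2] h3]; split; first split.
    - by move=> x; exact: h1.
    - by move=> x; exact: h2.
    - by move=> x; exact: h3.
  apply: closedI; first apply: closedI; apply: closed_bigI => x _.
  - case: (boolP (0 < y x)) => yx.
      apply: (closed_ext _ closedT) => v; split => // _ /= h.
      by exfalso; apply: h.
    apply: (closed_ext _ (pre_closed (@cont_phiv x) (@closed_eq R 0))) => v /=.
    by split; [apply; apply/negP | move=> ->].
  - exact: (pre_closed (@cont_inc x) (@closed_eq R _)).
  - have cn : continuous (fun v => `|phiv v x|).
      move=> v; apply: (@continuous_comp _ _ _ (fun v => phiv v x) (fun z : R => `|z|)).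
        exact: (@cont_phiv x v).
      exact: norm_continuous.
    exact: (pre_closed cn (@closed_le R M)).
have Scompact : compact S.
  apply: subclosed_compact Sclosed _ Sbox.
  apply: (@rV_compact _ _ (fun=> `[- M, M])) => _; exact: segment_compact.
have fS : forall g, unit_st_flow tl hd s t y g -> flow_energy r y g <= E0 -> S (psiv g).
  by move=> g fl Eg; split; rewrite phipsi //; exact: bound.
have Sne : S !=set0 by exists (psiv f0); apply: fS => //.
have [c cS cmin] := EVT_min_rV Sne Scompact (continuous_subspaceT cont_energy).
move: cS; rewrite in_setE => -[cfl _].
exists (phiv c); split => // g fl.
case: (leP (flow_energy r y g) E0) => Eg.
  have := cmin (psiv g); rewrite phipsi; apply; rewrite in_setE; exact: fS.
have := cmin (psiv f0); rewrite phipsi => h.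
apply: le_trans (ltW Eg); apply: h; rewrite in_setE; exact: fS.
Qed.

End MinFlow.
Section Young.
Variable R : realType.

Lemma young_step (r u v : R) : 0 < r -> 0 <= u -> 0 <= v ->
  r * u + v <= r + 1 -> u * v `^ r^-1 <= 1.
Proof.
move=> r0 u0 v0 h.
have r10 : 0 < r + 1 by lra.
have rn : r != 0 by rewrite gt_eqF.
have r1n : r + 1 != 0 by rewrite gt_eqF.
pose p := (r + 1) / r; pose q := r + 1.
have p0 : 0 < p by rewrite /p divr_gt0.
have pq : p^-1 + q^-1 = 1 by rewrite /p /q; field; by rewrite ?rn ?r1n.
have Y := conjugate_powR (powR_ge0 u (r / (r + 1))) (powR_ge0 v (r + 1)^-1) p0 r10 pq.
have ea : (u `^ (r / (r + 1))) `^ p = u.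
  have e : r / (r + 1) * p = 1 by rewrite /p; field; by rewrite ?rn ?r1n.
  by rewrite -powRrM e powRr1.
have eb : (v `^ (r + 1)^-1) `^ q = v.
  have e : (r + 1)^-1 * q = 1 by rewrite /q; field; by rewrite ?rn ?r1n.
  by rewrite -powRrM e powRr1.
rewrite ea eb in Y.
have Y1 : u `^ (r / (r + 1)) * v `^ (r + 1)^-1 <= 1.
  apply: le_trans Y _.
  have -> : u / p + v / q = (r * u + v) / (r + 1) by rewrite /p /q; field; by rewrite ?rn ?r1n.
  by rewrite ler_pdivrMr // mul1r.
have := @ge0_ler_powR R p (ltW p0) _ _ _ _ Y1.
rewrite powR1 powRM ?powR_ge0 // ea -powRrM.
have e : (r + 1)^-1 * p = r^-1 by rewrite /p; field; by rewrite ?rn ?r1n.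
rewrite e.
apply; rewrite nnegrE ?mulr_ge0 ?powR_ge0 //.
Qed.

End Young.
Unset Implicit Arguments.

Theorem lemma6 (R : realType) (V A : finType) (tl hd : A -> V) (s t : V)
  (r : R) (c gam : A -> R) (ybar : A -> \bar R) (B : R) :
  1 <= r -> s != t -> weakly_connected tl hd ->
  (forall a, 0 <= c a) -> (forall a, 0 <= gam a) -> 0 < B ->
  (forall a, ybar a = +oo%E) ->
  (exists (x : A -> bool) (y : A -> R), ndp_optimal tl hd s t r c gam ybar B x y) ->
  exists (x : A -> bool) (y : A -> R) (P : seq A),
    [/\ ndp_optimal tl hd s t r c gam ybar B x y,
        undirected_st_path tl hd s t P
      & forall a, a \notin P -> x a = false /\ y a = 0].
Proof.
move=> r1 st _ c0 gam0 B0 ybinf [x [y [[y0 Rle _ xsupp] opt]]].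
have r0 : 0 < r by lra.
have ex0 : exists f0, unit_st_flow tl hd s t y f0.
  case: (pselect (exists f0, unit_st_flow tl hd s t y f0)) => // nf.
  have : (+oo <= eff_resistance tl hd s t r y)%E.
    apply/ereal_infP => z [f ff _]; exfalso; apply: nf; exists f; exact: ff.
  by move=> /le_trans /(_ Rle); rewrite leye_eq.
have [f [ffl fmin]] := min_flow r1 ex0.
have EfB : flow_energy r y f <= B.
  rewrite -lee_fin; apply: le_trans Rle.
  apply/ereal_infP => z [g gf <-]; rewrite lee_fin; exact: fmin.
have [fsupp finc] := ffl.
have fy : forall a, f a != 0 -> 0 < y a.
  move=> a fa; case: (boolP (0 < y a)) => // ya.
  by move: fa; rewrite fsupp ?eqxx //; apply/negP.
pose C := \sum_a c a * y a.
have C0 : 0 <= C by apply: sumr_ge0 => a _; exact: mulr_ge0.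
pose l := fun a => r * (c a * y a / `|f a|) + C / B * (`|f a| `^ r / y a `^ r).
have l0 : forall a, 0 <= l a.
  move=> a; apply: addr_ge0.
    exact: (mulr_ge0 (ltW r0) (divr_ge0 (mulr_ge0 (c0 a) (y0 a)) (normr_ge0 _))).
  exact: (mulr_ge0 (divr_ge0 C0 (ltW B0)) (divr_ge0 (powR_ge0 _ _) (powR_ge0 _ _))).
have fl1 : isflow tl hd s t f 1 by move=> v; rewrite finc mul1r.
have [vs [P [sp Psupp LPle]]] :=
  decomp l0 (ltnSn #|[set a | f a != 0%R]|) ltr01 fl1.
have uP := spath_uniq sp.
have Lf : \sum_a `|f a| * l a <= (r + 1) * C.
  apply: (@le_trans _ _ (\sum_a (r * (c a * y a) + C / B * (if 0 < y a then `|f a| `^ (r + 1) / y a `^ r else 0)))); last first.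
    rewrite big_split /= -!mulr_sumr -big_mkcond /= -/C.
    have h : C / B * flow_energy r y f <= C.
      apply: le_trans (_ : C / B * B <= C).
        by apply: ler_wpM2l => //; rewrite divr_ge0 // ltW.
      by rewrite mulfVK ?gt_eqF.
    rewrite /flow_energy in h; lra.
  apply: ler_sum => a _.
  case: (eqVneq (f a) 0) => [fa0|fan].
    rewrite fa0 normr0 mul0r; apply: addr_ge0.
      exact: (mulr_ge0 (ltW r0) (mulr_ge0 (c0 a) (y0 a))).
    apply: mulr_ge0; first by rewrite divr_ge0 // ltW.
    by case: ifP => _ //; rewrite divr_ge0 ?powR_ge0.
  have ya := fy a fan; rewrite ya.
  have fpos : 0 < `|f a| by rewrite normr_gt0.
  have ep : `|f a| `^ (r + 1) = `|f a| * `|f a| `^ r.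
    by rewrite -{2}(addrK 1 r) mulr_powRB1 // ?ltW //; lra.
  rewrite /l mulrDr ep; apply: lerD.
    have fn : `|f a| != 0 by rewrite gt_eqF.
    have e : `|f a| * (r * (c a * y a / `|f a|)) = r * (c a * y a) by field.
    by rewrite e.
  have e2 : `|f a| * (C / B * (`|f a| `^ r / y a `^ r)) =
    C / B * (`|f a| * `|f a| `^ r / y a `^ r) by ring.
  by rewrite e2.
have LP := le_trans LPle Lf; rewrite mul1r in LP.
pose CP := \sum_(a <- P) c a * y a / `|f a|.
pose DP := \sum_(a <- P) `|f a| `^ r / y a `^ r.
have LPe : \sum_(a <- P) l a = r * CP + C / B * DP.
  by rewrite /l big_split /= -!mulr_sumr.
rewrite LPe in LP.
have CP0 : 0 <= CP by apply: sumr_ge0 => a _; rewrite divr_ge0 ?mulr_ge0.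
have Pne : P != [::].
  apply/eqP => P0; case: sp; rewrite P0 => sz hs ls _ _.
  case: vs sz hs ls => [//|z [|//]] _ /= zs zt.
  by move: st; rewrite -zs -zt eqxx.
have DP0 : 0 < DP.
  have [a0 a0P] : exists a0, a0 \in P.
    by case: (P) Pne => [//|a0 P'] _; exists a0; exact: mem_head.
  rewrite /DP sum_in_seq // (bigD1 a0) //= a0P.
  apply: ltr_pwDl.
    have fa0 := Psupp a0 a0P.
    by rewrite divr_gt0 // powR_gt0 // ?normr_gt0 ?fy.
  by apply: sumr_ge0 => a _; case: ifP => _ //; rewrite divr_ge0 ?powR_ge0.
pose k := (DP / B) `^ r^-1.
have k0 : 0 < k by rewrite powR_gt0 // divr_gt0.
have kCP : k * CP <= C.
  case: (eqVneq C 0) => [Ce|Cn].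
    have hz : C / B * DP = 0 by rewrite Ce !mul0r.
    have : r * CP <= 0 by move: LP; rewrite hz Ce mulr0 addr0.
    rewrite Ce pmulr_rle0 // => CPle.
    have -> : CP = 0 by apply/le_anti; rewrite CPle CP0.
    by rewrite mulr0.
  have Cp : 0 < C by rewrite lt_def Cn C0.
  have := @young_step R r (CP / C) (DP / B) r0 (divr_ge0 CP0 C0)
     (divr_ge0 (ltW DP0) (ltW B0)).
  have h : r * (CP / C) + DP / B <= r + 1.
    have Cn' : C != 0 by rewrite gt_eqF.
    have Bn : B != 0 by rewrite gt_eqF.
    have e : (r * (CP / C) + DP / B) * C = r * CP + C / B * DP by field; rewrite ?Cn' ?Bn.
    by rewrite -(ler_pM2r Cp) e.
  move/(_ h) => hy.
  rewrite -/k in hy.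
  have : CP / C * k * C <= 1 * C by apply: ler_wpM2r.
  have Cn' : C != 0 by rewrite gt_eqF.
  have e : CP / C * k * C = k * CP by field.
  by rewrite e mul1r.
pose y' := fun a => if a \in P then k * (y a / `|f a|) else 0.
pose x' := fun a => a \in P.
have y'pos : forall a, a \in P -> 0 < y' a.
  move=> a aP; rewrite /y' aP mulr_gt0 // divr_gt0 ?normr_gt0 ?fy ?Psupp //.
have y'P : forall a, (0 < y' a) = (a \in P).
  move=> a; case aP: (a \in P); first exact: y'pos.
  by rewrite /y' aP ltxx.
have Rle' : (eff_resistance tl hd s t r y' <= B%:E)%E.
  apply: ge_ereal_inf; exists (flow_energy r y' (psig R tl s vs P))%:E.
    exists (psig R tl s vs P) => //; split; last by move=> v; rewrite (psig_inc _ _ sp).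
    move=> a; rewrite y'P /psig => aP; by rewrite (negbTE (introN idP aP)).
  rewrite lee_fin /flow_energy big_mkcond /=.
  rewrite (eq_bigr (fun a => if a \in P then `|f a| `^ r / y a `^ r / k `^ r else 0)); last first.
    move=> a _; rewrite y'P; case aP: (a \in P) => //.
    have fa := Psupp a aP; have ya := fy a fa.
    have fp : 0 < `|f a| by rewrite normr_gt0.
    have : `|psig R tl s vs P a| = 1.
      by rewrite /psig aP; case: ifP; rewrite ?normrN normr1.
    move=> ->; rewrite powR1 /y' aP.
    have yf : 0 < y a / `|f a| by rewrite divr_gt0.
    rewrite (powRM _ (ltW k0) (ltW yf)).
    have e : (y a / `|f a|) `^ r = y a `^ r / `|f a| `^ r.
      have : (y a / `|f a| * `|f a|) `^ r = y a `^ r by rewrite mulfVK ?gt_eqF.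
      rewrite powRM ?divr_ge0 ?ltW // => e.
      by rewrite -e mulfK // gt_eqF // powR_gt0.
    rewrite e.
    have kr : 0 < k `^ r by rewrite powR_gt0.
    have yr : 0 < y a `^ r by rewrite powR_gt0.
    have fr : 0 < `|f a| `^ r by rewrite powR_gt0.
    field; by rewrite ?gt_eqF.
  rewrite -sum_in_seq // -mulr_suml -/DP.
  have dpb : 0 <= DP / B by rewrite divr_ge0 // ltW.
  rewrite /k -powRrM mulVf ?gt_eqF // (powRr1 dpb).
  have DPn : DP != 0 by rewrite gt_eqF.
  have Bn : B != 0 by rewrite gt_eqF.
  have e : DP / (DP / B) = B by field; rewrite ?DPn ?Bn.
  by rewrite e.
have feas' : ndp_feasible tl hd s t r ybar B x' y'.
  split => //.
  - move=> a; case aP: (a \in P); first exact: ltW (y'pos a aP).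
    by rewrite /y' aP.
  - by move=> a; rewrite ybinf; exact: leey.
  - by move=> a; rewrite y'P.
have cost' : ndp_cost c gam x' y' <= ndp_cost c gam x y.
  rewrite /ndp_cost.
  have e : \sum_a (c a * y' a + gam a * (x' a)%:R) =
      \sum_a (if a \in P then k * (c a * y a / `|f a|) + gam a else 0).
    apply: eq_bigr => a _; rewrite /y' /x'; case: (a \in P).
      by rewrite mulr1 mulrCA !mulrA.
    by rewrite mulr0 mulr0 addr0.
  rewrite e -sum_in_seq // big_split /= -mulr_sumr -/CP big_split /= -/C.
  apply: lerD => //.
  rewrite sum_in_seq //; apply: ler_sum => a _.
  case aP: (a \in P).
    by rewrite (xsupp a (fy a (Psupp a aP))) mulr1.
  by rewrite mulr_ge0.
have opt' : ndp_optimal tl hd s t r c gam ybar B x' y'.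
  by split => // x'' y'' f''; apply: le_trans cost' (opt _ _ f'').
exists x', y', P; split => //.
  by exists vs; exact: sp.
move=> a aP; split; first by rewrite /x' (negbTE aP).
by rewrite /y' (negbTE aP).
Qed.
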